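(* Let $X$ be a supertropical semiring. (1) With its intrinsic order, $X$ is a bounded join-semilattice, with $\sup\emptyset=0$ and, for $x,y\in X$, $\sup\{x,y\}=x+y$ if $x\ne y$ and $\sup\{x,y\}=x$ if $x=y$. (2) Let $n\in\mathbb{N}$, $a_1,\dots,a_n\in X$, $s=a_1+\dots+a_n$ and $M=\sup\{a_1,\dots,a_n\}$. Then $s\notin\nu X$ if and only if $M\notin\nu X$ and there is exactly one $i\in\{1,\dots,n\}$ with $a_i=M$, if and only if $M\notin\nu X$ and there is exactly one $i\in\{1,\dots,n\}$ with $a_i=M=s$.
   Context: A semiring $(X,+,0,\cdot)$: $(X,+,0)$ commutative monoid, $(X,\cdot)$ semigroup, distributivity, $0$ absorbing. Intrinsic order: $a\le b$ iff $a+x=b$ for some $x$. $\nu(x)=x+x$; $\nu X=\{a: a=a+a\}$. A supertropical semiring is a unital commutative semiring with $2=4$ (where $n=1+\dots+1$), such that $a+b\in\{a,b\}$ whenever $\nu(a)\ne\nu(b)$, and $a+b=\nu(a)$ whenever $\nu(a)=\nu(b)$. A bounded join-semilattice is a partial order in which every finite subset has a least upper bound. *)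

(* Defs.v *)
From mathcomp Require Import all_boot all_algebra.
Set Implicit Arguments. Unset Strict Implicit. Unset Printing Implicit Defensive.
Import GRing.Theory.
Local Open Scope ring_scope.

(* Unital commutative semirings (trivial semiring 1 = 0 allowed) are
   MathComp's comPzSemiRingType. *)

Definition nu {X : comPzSemiRingType} (x : X) : X := x + x.

Definition in_nuX {X : comPzSemiRingType} (a : X) : Prop := a = a + a.

Definition supertropical (X : comPzSemiRingType) : Prop :=
  [/\ (2%:R : X) = 4%:R,
      (forall a b : X, nu a <> nu b -> a + b = a \/ a + b = b) &
      (forall a b : X, nu a = nu b -> a + b = nu a)].

Definition ile {X : comPzSemiRingType} (a b : X) : Prop := exists x, a + x = b.

Definition is_lub {X : comPzSemiRingType} (S : X -> Prop) (m : X) : Prop :=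
  (forall s, S s -> ile s m) /\
  (forall u, (forall s, S s -> ile s u) -> ile m u).

Definition ile_partial_order (X : comPzSemiRingType) : Prop :=
  [/\ (forall a : X, ile a a),
      (forall a b : X, ile a b -> ile b a -> a = b) &
      (forall a b c : X, ile a b -> ile b c -> ile a c)].

(* Main.v *)
Require Import Defs.
From mathcomp Require Import all_boot all_algebra.
From mathcomp Require Import ring.
Import GRing.Theory.
Set Implicit Arguments. Unset Strict Implicit.
Local Open Scope ring_scope.

Section ST.
Variable X : comPzSemiRingType.
Hypothesis HX : supertropical X.

Lemma nunu (a : X) : nu (nu a) = nu a.
Proof.
case: HX => H2 _ _.
have := congr1 (fun c => c * a) H2 => /=.
rewrite !mulr_natl !mulrS mulr0n !addr0 /nu => E.
rewrite [RHS]E; ring.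
Qed.

Lemma ax_ne (a b : X) : nu a <> nu b -> a + b = a \/ a + b = b.
Proof. by case: HX => _ H _; apply: H. Qed.

Lemma ax_eq (a b : X) : nu a = nu b -> a + b = nu a.
Proof. by case: HX => _ _ H; apply: H. Qed.

Lemma add_nu (a : X) : a + nu a = nu a.
Proof. by apply: ax_eq; rewrite nunu. Qed.

Lemma nuD (a b : X) : nu (a + b) = nu a + nu b.
Proof. rewrite /nu; ring. Qed.

Lemma nu_absorb (x p : X) : x + p = p -> nu x + p = p.
Proof. move=> H. by rewrite /nu -addrA H H. Qed.

Lemma K (x y : X) : ile x y -> x <> y -> x + y = y.
Proof.
move=> [p Hp] Hne; subst y.
rewrite addrA -/(nu x).
case: (eqVneq (nu x) (nu p)) => [E|/eqP E].
  by rewrite (ax_eq E) ax_eq // nunu.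
case: (ax_ne E) => H; first by rewrite H in Hne.
by rewrite H nu_absorb.
Qed.

Lemma antisym (a b : X) : ile a b -> ile b a -> a = b.
Proof.
move=> [x Hx] [y Hy].
have Ha : a + (x + y) = a by rewrite addrA Hx Hy.
have Hnz : a + nu (x + y) = a by rewrite /nu addrA Ha Ha.
have Hnx : a + nu x = a.
  have E : nu x + nu x = nu x by rewrite -[RHS]nunu.
  rewrite -{1}Hnz nuD.
  have -> : a + (nu x + nu y) + nu x = a + (nu x + nu x) + nu y by ring.
  by rewrite E -addrA -nuD Hnz.
rewrite -Hx.
case: (eqVneq (nu a) (nu x)) => [E|/eqP E].
  by rewrite (ax_eq E) -add_nu E Hnx.
case: (ax_ne E) => // H.
exfalso; apply: E.
have : a = nu x by rewrite -{1}Hnx /nu addrA H.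
by move=> ->; rewrite nunu.
Qed.

Lemma lub_pair (x y : X) (Hne : x <> y) : is_lub (fun z => z = x \/ z = y) (x + y).
Proof.
split.
  move=> s [->|->]; first by exists y.
  by exists x; rewrite addrC.
move=> u Hu.
have [hx hy] := (Hu x (or_introl erefl), Hu y (or_intror erefl)).
case: (eqVneq x u) => [Exu|/eqP Exu].
  subst u; exists 0; rewrite addr0 addrC; apply: K => // E; exact: Hne (esym E).
case: (eqVneq y u) => [Eyu|/eqP Eyu].
  subst u; exists 0; rewrite addr0; exact: K.
exists u; by rewrite -addrA (K hy Eyu) (K hx Exu).
Qed.

Lemma lub_one (x : X) : is_lub (fun z => z = x \/ z = x) x.
Proof.
split; first by move=> s [->|->]; exists 0; rewrite addr0.
by move=> u Hu; exact: Hu x (or_introl erefl).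
Qed.

Lemma join_ex (x y : X) : exists j, is_lub (fun z => z = x \/ z = y) j.
Proof.
case: (eqVneq x y) => [->|/eqP E]; first by exists y; exact: lub_one.
by exists (x + y); exact: lub_pair.
Qed.

Lemma ile_trans (a b c : X) : ile a b -> ile b c -> ile a c.
Proof. move=> [x <-] [y <-]; exists (x + y); by rewrite addrA. Qed.

Lemma ile_add (a b : X) : ile a (a + b).
Proof. by exists b. Qed.

End ST.

Theorem lemma5p6 (X : comPzSemiRingType) (HX : supertropical X) :
  (* (1) bounded join-semilattice, with the explicit suprema *)
  (ile_partial_order X /\
   (forall F : seq X, exists m : X, is_lub (fun z => z \in F) m) /\
   is_lub (fun _ : X => False) 0 /\
   (forall x y : X, x <> y -> is_lub (fun z => z = x \/ z = y) (x + y)) /\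
   (forall x : X, is_lub (fun z => z = x \/ z = x) x)) /\
  (* (2) *)
  (forall (n : nat) (a : 'I_n -> X) (M : X),
      is_lub (fun z => exists i : 'I_n, z = a i) M ->
      let s := \sum_(i < n) a i in
      (~ in_nuX s <-> (~ in_nuX M /\ exists! i : 'I_n, a i = M)) /\
      ((~ in_nuX M /\ exists! i : 'I_n, a i = M) <->
       (~ in_nuX M /\ exists! i : 'I_n, a i = M /\ M = s))).
Proof.
split.
  split; first split.
  - by move=> a; exists 0; rewrite addr0.
  - exact: antisym.
  - exact: ile_trans.
  split.
    elim=> [|x F [m [Hm1 Hm2]]].
      exists 0; split => // u _; exists u; by rewrite add0r.
    have [j [Hj1 Hj2]] := join_ex HX x m.
    exists j; split.
      move=> z; rewrite in_cons => /orP [/eqP ->|Hz].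
        exact: Hj1 (or_introl erefl).
      apply: ile_trans (Hm1 _ Hz) (Hj1 _ (or_intror erefl)).
    move=> u Hu; apply: Hj2 => z [->|->].
      by apply: Hu; rewrite in_cons eqxx.
    apply: Hm2 => w Hw; apply: Hu; by rewrite in_cons Hw orbT.
  split; first by split => // u _; exists u; rewrite add0r.
  split; first exact: lub_pair.
  exact: lub_one.
move=> n a M [HM1 HM2] s.
have Hle i : ile (a i) M by apply: HM1; exists i.
have sum_absorb (P : pred 'I_n) m :
    (forall i, P i -> a i + m = m) -> (\sum_(i < n | P i) a i) + m = m.
  move=> H; apply: (big_ind (fun v => v + m = m)); first by rewrite add0r.
    by move=> v w Hv Hw; rewrite -addrA Hw.
  exact: H.
have HMs : ile M s.
  apply: HM2 => z [i ->].
  rewrite /s (bigD1 i) //=; exact: ile_add.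
have Hsnu : s + nu M = nu M.
  rewrite /s -(big_mkcond (fun _ => true)) /=.
  apply: (sum_absorb xpredT) => i _.
  case: (eqVneq (a i) M) => [->|/eqP E]; first exact: add_nu.
  by rewrite /nu addrA (K HX (Hle i) E).
have HsM : s = M \/ s = nu M.
  case: (eqVneq s M) => [->|/eqP E]; first by left.
  right; have H := K HX HMs (fun e => E (esym e)).
  by rewrite -Hsnu addrC nu_absorb.
have nuM : in_nuX (nu M) by rewrite /in_nuX -[nu M in LHS]nunu.
have uniq_sM : (exists! i : 'I_n, a i = M) -> s = M.
  move=> [i [Hi Hu]].
  rewrite /s (bigD1 i) //= Hi addrC.
  apply: sum_absorb => j Hj.
  apply: (K HX (Hle j)) => E; move/eqP: Hj; apply; exact: esym (Hu j E).
split.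
  split.
    move=> Hs.
    have sM : s = M by case: HsM => // E; rewrite E in Hs.
    split; first by rewrite -sM.
    have [i Hi] : exists i, a i = M.
      case: (pickP (fun i => a i == M)) => [i /eqP Hi|Hno]; first by exists i.
      exfalso; apply: Hs.
      have : s + M = M.
        rewrite /s -(big_mkcond (fun _ => true)) /=.
        apply: (sum_absorb xpredT) => i _; apply: (K HX (Hle i)).
        by move=> E; move: (Hno i); rewrite E eqxx.
      by rewrite /in_nuX sM => ->.
    exists i; split => // j Hj.
    case: (eqVneq i j) => // /eqP Eij; exfalso; apply: Hs.
    have : M + s = s.
      rewrite /s (bigD1 i) //= (bigD1 j) /=; last by rewrite eq_sym; apply/eqP.
      rewrite Hi Hj !addrA.
      have -> : M + M + M = M + nu M by rewrite /nu addrA.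
      by rewrite add_nu.
    by rewrite /in_nuX sM => ->.
  move=> [HnM Hu]; by rewrite (uniq_sM Hu).
split.
  move=> [HnM Hu]; split => //.
  have sM := uniq_sM Hu.
  case: Hu => i [Hi Hu]; exists i; split => // j [Hj _]; exact: Hu.
move=> [HnM [i [[Hi Hs] Hu]]]; split => //.
exists i; split => // j Hj; apply: Hu; split => //.
Qed.
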